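(* For every connected undirected graph $G$ on exactly $4$ vertices, $\mathbf{C}_G=\frac34$; that is, $\mathrm{Var}\, M_G f\le \frac34 \mathrm{Var} f$ for all $f\colon V\to\mathbb{R}$, and the constant $\frac34$ cannot be replaced by any smaller number. (Concretely, this holds for each of the six such graphs up to isomorphism: the complete graph $K_4$, the star $S_4$ (one central vertex adjacent to three leaves), the cycle $C_4$, the path $P_4$, the paw graph (a triangle with one pendant vertex attached to one triangle vertex), and the diamond graph ($K_4$ minus one edge).)
   Context: Let $G=(V,E)$ be a finite connected undirected graph, with graph distance $d_G(v,w)$ equal to the number of edges in a shortest path from $v$ to $w$. The ball is $\mathrm{B}_G(v,r)=\{w\in V: d_G(v,w)\le r\}$. The Hardy–Littlewood maximal operator on $G$ is $(M_G f)(v)=\max_{r\ge 0}\frac{1}{|\mathrm{B}_G(v,r)|}\sum_{w\in \mathrm{B}_G(v,r)}|f(w)|$. The variation is $\mathrm{Var} f=\sum_{vw\in E}|f(v)-f(w)|$ (each edge counted once). $\mathbf{C}_G$ is the smallest number in $[0,\infty]$ such that $\mathrm{Var}\, M_G f\le \mathbf{C}_G \mathrm{Var} f$ for all $f\colon V\to\mathbb{R}$. *)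

(* Defs.v *)
From HB Require Import structures.
From mathcomp Require Import all_boot all_order all_algebra.
Set Implicit Arguments. Unset Strict Implicit. Unset Printing Implicit Defensive.
Import Order.TTheory GRing.Theory Num.Theory.
Local Open Scope ring_scope.

Definition simple_graph (T : finType) (e : rel T) : Prop :=
  symmetric e /\ irreflexive e.

Definition connected_graph (T : finType) (e : rel T) : Prop :=
  forall x y : T, connect e x y.

(* Ball B_G(v,r) = {w | d_G(v,w) <= r}: w is reachable from v by a walk
   with at most r edges (a walk with n edges is an n-tuple of successors). *)
Definition ball (T : finType) (e : rel T) (v : T) (r : nat) : {set T} :=
  [set w | [exists n : 'I_r.+1,
             [exists p : n.-tuple T, path e v p && (last v p == w)]]].

Definition ball_avg (R : realFieldType) (T : finType) (e : rel T)
  (f : T -> R) (v : T) (r : nat) : R :=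
  (\sum_(w in ball e v r) `|f w|) / #|ball e v r|%:R.

(* Hardy--Littlewood maximal operator: maximum over radii r >= 0.  Since
   every distance in a graph on #|T| vertices is < #|T|, the balls (hence the
   averages) are constant for r >= #|T|, so radii r < #|T|.+1 suffice. *)
Definition maxop (R : realFieldType) (T : finType) (e : rel T)
  (f : T -> R) (v : T) : R :=
  \big[Num.max/0]_(r < #|T|.+1) ball_avg e f v r.

(* Variation: sum over edges, each edge counted once; since e is symmetric
   and irreflexive, this is half of the sum over ordered adjacent pairs. *)
Definition var (R : realFieldType) (T : finType) (e : rel T) (f : T -> R) : R :=
  (\sum_(x : T) \sum_(y : T | e x y) `|f x - f y|) / 2.

(* Main.v *)
Require Import Defs.
From HB Require Import structures.
From mathcomp Require Import all_boot all_order all_algebra.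
From mathcomp Require Import lra.
From Stdlib Require FunctionalExtensionality.
Import Order.TTheory GRing.Theory Num.Theory.
Local Open Scope ring_scope.
Set Implicit Arguments. Unset Strict Implicit. Unset Printing Implicit Defensive.
Lemma ball_map (T1 T2 : finType) (g : T1 -> T2) (h : T2 -> T1)
  (gK : cancel g h) (hK : cancel h g) (e : rel T2) v r :
  ball e (g v) r = g @: ball (relpre g e) v r.
Proof.
apply/setP => w; rewrite -[w]hK (mem_imset _ _ (can_inj gK)) !inE.
apply: eq_existsb => n; apply/existsP/existsP => [[p Hp]|[p Hp]].
  exists (map_tuple h p).
  rewrite /= -path_map -(inj_eq (can_inj gK)) -last_map (mapK hK).
  by rewrite hK in Hp *.
exists (map_tuple g p); rewrite /= path_map last_map (inj_eq (can_inj gK)).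
by [].
Qed.

Lemma ball_avg_map (R : realFieldType) (T1 T2 : finType) (g : T1 -> T2) (h : T2 -> T1)
  (gK : cancel g h) (hK : cancel h g) (e : rel T2) (f : T2 -> R) v r :
  ball_avg e f (g v) r = ball_avg (relpre g e) (fun x => f (g x)) v r.
Proof.
rewrite /ball_avg (ball_map gK hK) (card_imset _ (can_inj gK)).
by rewrite big_imset //; move=> x y _ _; apply: (can_inj gK).
Qed.

Lemma maxop_map (R : realFieldType) (T1 T2 : finType) (g : T1 -> T2) (h : T2 -> T1)
  (gK : cancel g h) (hK : cancel h g) (e : rel T2) (f : T2 -> R) v :
  #|T1| = #|T2| ->
  maxop e f (g v) = maxop (relpre g e) (fun x => f (g x)) v.
Proof.
move=> HT; rewrite /maxop HT; apply: eq_bigr => r _.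
exact: ball_avg_map.
Qed.

Lemma var_map (R : realFieldType) (T1 T2 : finType) (g : T1 -> T2) (h : T2 -> T1)
  (gK : cancel g h) (hK : cancel h g) (e : rel T2) (f : T2 -> R) :
  var e f = var (relpre g e) (fun x => f (g x)).
Proof.
rewrite /var (reindex g); last by exists h => x _; [apply: gK | apply: hK].
congr (_ / _); apply: eq_bigr => x _.
rewrite (reindex g) /=; last by exists h => y _; [apply: gK | apply: hK].
by [].
Qed.

Lemma var_ext (R : realFieldType) (T : finType) (e : rel T) (f1 f2 : T -> R) :
  f1 =1 f2 -> var e f1 = var e f2.
Proof.
move=> H; rewrite /var; congr (_ / _); apply: eq_bigr => x _.
by apply: eq_bigr => y _; rewrite !H.
Qed.

Lemma maxop_ext (R : realFieldType) (T : finType) (e : rel T) (f1 f2 : T -> R) v :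
  f1 =1 f2 -> maxop e f1 v = maxop e f2 v.
Proof.
move=> H; rewrite /maxop; apply: eq_bigr => r _; rewrite /ball_avg.
by congr (_ / _); apply: eq_bigr => y _; rewrite !H.
Qed.

Definition i0 : 'I_4 := @Ordinal 4 0 isT.
Definition i1 : 'I_4 := @Ordinal 4 1 isT.
Definition i2 : 'I_4 := @Ordinal 4 2 isT.
Definition i3 : 'I_4 := @Ordinal 4 3 isT.

Definition relb (b01 b02 b03 b12 b13 b23 : bool) : rel 'I_4 := fun i j =>
  match nat_of_ord i, nat_of_ord j with
  | 0,1 | 1,0 => b01 | 0,2 | 2,0 => b02 | 0,3 | 3,0 => b03
  | 1,2 | 2,1 => b12 | 1,3 | 3,1 => b13 | 2,3 | 3,2 => b23 | _,_ => false end.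


Lemma ord4P (P : 'I_4 -> Prop) : P i0 -> P i1 -> P i2 -> P i3 -> forall i, P i.
Proof.
move=> H0 H1 H2 H3 [[|[|[|[|k]]]] Hk] //.
- by rewrite (_ : Ordinal Hk = i0) //; apply: val_inj.
- by rewrite (_ : Ordinal Hk = i1) //; apply: val_inj.
- by rewrite (_ : Ordinal Hk = i2) //; apply: val_inj.
- by rewrite (_ : Ordinal Hk = i3) //; apply: val_inj.
Qed.

Fixpoint walk (T : eqType) (E : rel T) (s : seq T) (v : T) (n : nat) (w : T) : bool :=
  if n is n'.+1 then has (fun u => walk E s v n' u && E u w) s else v == w.

Lemma walkP (T : finType) (E : rel T) (s : seq T) (Hs : forall u, u \in s) v n w :
  [exists p : n.-tuple T, path E v p && (last v p == w)] = walk E s v n w.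
Proof.
elim: n w => [|n IH] w /=.
  apply/existsP/idP => [[p]|/eqP <-]; first by rewrite (tuple0 p).
  by exists [tuple]; rewrite /= eqxx.
apply/existsP/hasP => [[[p Sp]] /= /andP[Hp /eqP Hl]|[u _ /andP[Hu Euw]]].
  move: Sp Hp Hl; case/lastP: p => [//|q x]; rewrite size_rcons => /eqP[Sq].
  rewrite rcons_path last_rcons => /andP[Hq Hx] Hxw.
  exists (last v q); first exact: Hs.
  rewrite -Hxw Hx andbT -IH; apply/existsP.
  by exists (Tuple (introT eqP Sq)); rewrite /= Hq eqxx.
move: Hu; rewrite -IH => /existsP[q /andP[Hq /eqP Hl]].
have Sq : size (rcons q w) == n.+1 by rewrite size_rcons size_tuple.
exists (Tuple Sq); rewrite /= rcons_path last_rcons Hq Hl Euw eqxx.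
by [].
Qed.

Definition ords : seq 'I_4 := [:: i0; i1; i2; i3].
Lemma ords_all u : u \in ords.
Proof. by move: u; apply: ord4P. Qed.

Definition inb (E : rel 'I_4) v r w := has (fun n => walk E ords v n w) (iota 0 r.+1).

Lemma in_ballE (E : rel 'I_4) v r w : (w \in ball E v r) = inb E v r w.
Proof.
rewrite inE /inb; apply/existsP/hasP => [[n Hn]|[n Hn Hw]].
  by exists (val n); [rewrite mem_iota /= | rewrite -(walkP _ ords_all)].
have Hn' : (n < r.+1)%N by move: Hn; rewrite mem_iota.
by exists (Ordinal Hn'); rewrite (walkP _ ords_all).
Qed.

Definition cardb (E : rel 'I_4) v r := count (inb E v r) ords.

Lemma sum4 (R : realFieldType) (G : 'I_4 -> R) :
  \sum_i G i = G i0 + G i1 + G i2 + G i3.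
Proof.
rewrite !big_ord_recr big_ord0 /= add0r.
by congr (_ + _ + _ + _); congr G; apply: val_inj.
Qed.

Lemma sumn4 (G : 'I_4 -> nat) :
  (\sum_i G i = G i0 + (G i1 + (G i2 + (G i3 + 0))))%N.
Proof.
rewrite !big_ord_recr big_ord0 /= add0n !addnA addn0.
by congr (_ + _ + _ + _)%N; congr G; apply: val_inj.
Qed.

Lemma ballsum (R : realFieldType) (E : rel 'I_4) v r (G : 'I_4 -> R) :
  \sum_(w in ball E v r) G w =
  (if inb E v r i0 then G i0 else 0) + (if inb E v r i1 then G i1 else 0) +
  (if inb E v r i2 then G i2 else 0) + (if inb E v r i3 then G i3 else 0).
Proof. by rewrite big_mkcond sum4 /= !in_ballE. Qed.

Lemma card_ballE (E : rel 'I_4) v r : #|ball E v r| = cardb E v r.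
Proof.
rewrite -sum1_card big_mkcond sumn4 /cardb /= !in_ballE.
by do 4! case: ifP.
Qed.

Lemma maxop_chain (R : realFieldType) (E : rel 'I_4) (F : 'I_4 -> R) v :
  maxop E F v = Num.max (ball_avg E F v 0) (Num.max (ball_avg E F v 1)
    (Num.max (ball_avg E F v 2) (Num.max (ball_avg E F v 3) (ball_avg E F v 4)))).
Proof.
rewrite /maxop card_ord -(big_mkord (fun _ => true)) unlock /=.
rewrite (@max_l _ _ _ 0) //.
by rewrite /ball_avg divr_ge0 // sumr_ge0.
Qed.

Lemma ball_avgE (R : realFieldType) (E : rel 'I_4) (F : 'I_4 -> R) v r :
  ball_avg E F v r =
  ((if inb E v r i0 then `|F i0| else 0) + (if inb E v r i1 then `|F i1| else 0) +
  (if inb E v r i2 then `|F i2| else 0) + (if inb E v r i3 then `|F i3| else 0))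
  / (cardb E v r)%:R.
Proof. by rewrite /ball_avg ballsum card_ballE. Qed.

Definition vt (R : realFieldType) (E : rel 'I_4) (G : 'I_4 -> R) x y :=
  if E x y then `|G x - G y| else 0.

Lemma inner4 (R : realFieldType) (E : rel 'I_4) (G : 'I_4 -> R) x :
  \sum_(y | E x y) `|G x - G y| = vt E G x i0 + vt E G x i1 + vt E G x i2 + vt E G x i3.
Proof. by rewrite big_mkcond sum4. Qed.

Lemma var4 (R : realFieldType) (E : rel 'I_4) (G : 'I_4 -> R) :
  var E G = (vt E G i0 i1 + vt E G i0 i2 + vt E G i0 i3 +
             vt E G i1 i0 + vt E G i1 i2 + vt E G i1 i3 +
             vt E G i2 i0 + vt E G i2 i1 + vt E G i2 i3 +
             vt E G i3 i0 + vt E G i3 i1 + vt E G i3 i2 +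
             (vt E G i0 i0 + vt E G i1 i1 + vt E G i2 i2 + vt E G i3 i3)) / 2.
Proof.
rewrite /var sum4 !inner4.
congr (_ / _); lra.
Qed.

Lemma var4s (R : realFieldType) (E : rel 'I_4) (G : 'I_4 -> R) :
  symmetric E ->
  var E G = vt E G i0 i1 + vt E G i0 i2 + vt E G i0 i3 +
            vt E G i1 i2 + vt E G i1 i3 + vt E G i2 i3.
Proof.
move=> HE; rewrite var4 /vt !subrr !normr0 !if_same.
rewrite (HE i1 i0) (HE i2 i0) (HE i3 i0) (HE i2 i1) (HE i3 i1) (HE i3 i2).
rewrite (distrC (G i1)) (distrC (G i2) (G i0)) (distrC (G i3) (G i0)).
rewrite (distrC (G i2) (G i1)) (distrC (G i3) (G i1)) (distrC (G i3) (G i2)).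
do 6! case: (E _ _); lra.
Qed.

Lemma key_max (R : realFieldType) (x y : R) :
  x <= Num.max x y /\ y <= Num.max x y /\ (Num.max x y = x \/ Num.max x y = y).
Proof.
have [h|h] := leP x y.
  by split => //; split => //; right.
by split => //; split; [exact: ltW | left].
Qed.

Lemma key_abs (R : realFieldType) (x : R) : `|x| = x \/ `|x| = - x.
Proof. by case: (ler0P x) => h; [right | left]. Qed.

Lemma key_dist (R : realFieldType) (a b : R) :
  `|a| - `|b| <= `|a - b| /\ `|b| - `|a| <= `|a - b|.
Proof.
split; first exact: lerB_dist.
by rewrite distrC; exact: lerB_dist.
Qed.

Lemma symm_relb E : simple_graph E ->
  E = relb (E i0 i1) (E i0 i2) (E i0 i3) (E i1 i2) (E i1 i3) (E i2 i3).
Proof.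
move=> [Hs Hi]; apply: FunctionalExtensionality.functional_extensionality => x.
apply: FunctionalExtensionality.functional_extensionality => y.
move: x y; apply: ord4P; apply: ord4P => //=; rewrite ?Hi // Hs //.
Qed.

Lemma relb_sym a b c d e f : symmetric (relb a b c d e f).
Proof. by move=> x y; move: x y; apply: ord4P; apply: ord4P. Qed.

Lemma connect_ball (T : finType) (e : rel T) x y :
  connect e x y -> y \in ball e x #|T|.-1.
Proof.
move/connectP => [p Hp ->].
case/shortenP: Hp => q Hq Uq _.
have Sq : (size q < #|T|)%N.
  by rewrite -ltnS -/(size (x :: q)) -(card_uniqP Uq) ltnS max_card.
rewrite inE; apply/existsP.
have Hn : (size q < #|T|.-1.+1)%N by rewrite prednK // (leq_ltn_trans _ Sq).
exists (Ordinal Hn); apply/existsP.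
by exists (in_tuple q); rewrite Hq eqxx.
Qed.

Lemma conn4 E : connected_graph E ->
  [&& inb E i0 3 i1, inb E i0 3 i2 & inb E i0 3 i3].
Proof.
move=> Hc; rewrite -!in_ballE.
have := connect_ball (Hc i0 i1); have := connect_ball (Hc i0 i2).
have := connect_ball (Hc i0 i3).
by rewrite card_ord /= => -> -> ->.
Qed.


Lemma chain2 (R : realFieldType) (m a b : R) : m = Num.max a b ->
  a <= m /\ b <= m /\ (m = a \/ m = b).
Proof. by move=> ->; exact: key_max. Qed.

Lemma chain3 (R : realFieldType) (m a b c : R) : m = Num.max a (Num.max b c) ->
  a <= m /\ b <= m /\ c <= m /\ (m = a \/ m = b \/ m = c).
Proof.
move=> ->; have [h1 [h2 h3]] := key_max b c.
have [k1 [k2 k3]] := key_max a (Num.max b c).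
split => //; split; first exact: le_trans h1 k2.
split; first exact: le_trans h2 k2.
case: k3 => ->; first by left.
case: h3 => ->; [by right; left | by right; right].
Qed.

Lemma chain4 (R : realFieldType) (m a b c d : R) : m = Num.max a (Num.max b (Num.max c d)) ->
  a <= m /\ b <= m /\ c <= m /\ d <= m /\ (m = a \/ m = b \/ m = c \/ m = d).
Proof.
move=> Hm; have [h1 [h2 [h3 h4]]] := chain3 (erefl (Num.max b (Num.max c d))).
have [k1 [k2 k3]] := key_max a (Num.max b (Num.max c d)).
rewrite -Hm in k1 k2 k3.
split => //; split; first exact: le_trans h1 k2.
split; first exact: le_trans h2 k2.
split; first exact: le_trans h3 k2.
case: k3 => ->; first by left.
case: h4 => [->|[->|->]]; [by right; left | by right; right; left | by right; right; right].
Qed.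

Lemma key_max_r (R : realFieldType) (x y : R) : x <= y -> Num.max x y = y.
Proof. by move=> h; apply/max_idPr. Qed.
Lemma key_max_l (R : realFieldType) (x y : R) : y <= x -> Num.max x y = x.
Proof. by move=> h; apply/max_idPl. Qed.
Lemma key_abs_p (R : realFieldType) (x : R) : 0 <= x -> `|x| = x.
Proof. exact: ger0_norm. Qed.
Lemma key_abs_n (R : realFieldType) (x : R) : x <= 0 -> `|x| = - x.
Proof. exact: ler0_norm. Qed.

Lemma key_nabs (R : realFieldType) (x : R) : x <= `|x| /\ - x <= `|x|.
Proof. by split; [exact: ler_norm | rewrite -normrN; exact: ler_norm]. Qed.

Ltac evalrel := repeat match goal with
 | |- context [relb ?a ?b ?c ?d ?e ?f ?x ?y] =>
      let bb := eval vm_compute in (relb a b c d e f x y) in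
      rewrite (_ : relb a b c d e f x y = bb); [| by vm_compute]
 end.

Ltac evalb_in H := repeat match type of H with
 | context [inb ?E ?v ?r ?w] => let b := eval vm_compute in (inb E v r w) in
      rewrite (_ : inb E v r w = b) in H; [| by vm_compute]
 | context [cardb ?E ?v ?r] => let b := eval vm_compute in (cardb E v r) in
      rewrite (_ : cardb E v r = b) in H; [| by vm_compute]
 end.

Ltac expand_vertex E F i :=
  let H := fresh "H" in
  have H := erefl (maxop E F i);
  rewrite {2}maxop_chain !ball_avgE in H;
  evalb_in H; cbv beta iota in H; rewrite !maxxx in H;
  move: H; (first [move/chain4 | move/chain3 | move/chain2 | idtac]);
  let m := fresh "M" in set m := maxop E F i; clearbody m.

Ltac gen_facts F :=
  repeat match goal with |- context [ `|F ?a - F ?b| ] =>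
    let n := fresh "n" in
    move: (key_dist (F a) (F b)); set n := `|F a - F b|; clearbody n end;
  repeat match goal with |- context [ `|F ?a| ] =>
    let n := fresh "a" in
    move: (normr_ge0 (F a)); set n := `|F a|; clearbody n end;
  repeat match goal with |- context [ Num.max ?x ?y ] =>
    let n := fresh "m" in
    move: (key_max x y); set n := Num.max x y; clearbody n end;
  repeat match goal with |- context [ `|?x| ] =>
    let n := fresh "l" in
    move: (key_abs x); set n := `|x|; clearbody n end.

Ltac upper E F :=
  rewrite !(var4s _ (relb_sym _ _ _ _ _ _)) /vt;
  evalrel; cbv beta iota;
  expand_vertex E F i0; expand_vertex E F i1;
  expand_vertex E F i2; expand_vertex E F i3;
  gen_facts F; intros; lra.


Ltac lowerT E F H0 H1 H2 H3 :=
  rewrite !(var4s _ (relb_sym _ _ _ _ _ _)) /vt;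
  evalrel; cbv beta iota;
  expand_vertex E F i0; expand_vertex E F i1;
  expand_vertex E F i2; expand_vertex E F i3;
  rewrite H0 H1 H2 H3 ?subr0 ?sub0r ?subrr ?normrN ?normr0 ?normr1;
  repeat match goal with |- context [ Num.max ?x ?y ] =>
    let n := fresh "m" in
    move: (key_max x y); set n := Num.max x y; clearbody n end;
  repeat match goal with |- context [ `|?x| ] =>
    let n := fresh "l" in
    move: (key_nabs x); set n := `|x|; clearbody n end;
  intros; lra.


Ltac disc Hc := let H := fresh in have H := conn4 Hc; exfalso; move: H; vm_compute;
  let H := fresh in move=> H; discriminate H.

Definition Pgood (R : realFieldType) (T : finType) (e : rel T) : Prop :=
  (forall f : T -> R, var e (maxop e f) <= 3 / 4 * var e f) /\
  (exists f : T -> R, 3 / 4 * var e f <= var e (maxop e f) /\ 0 < var e f).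

Lemma P_map (R : realFieldType) (T1 T2 : finType) (g : T1 -> T2) (h : T2 -> T1)
  (gK : cancel g h) (hK : cancel h g) (e : rel T2) :
  #|T1| = #|T2| -> Pgood R (relpre g e) -> Pgood R e.
Proof.
move=> HT [Hu [F [Hl Hp]]]; split.
  move=> f; rewrite (var_map gK hK e (maxop e f)) (var_map gK hK e f).
  rewrite (@var_ext _ _ _ _ (maxop (relpre g e) (fun x => f (g x)))); first exact: Hu.
  by move=> x; rewrite (maxop_map gK hK).
exists (fun y => F (h y)).
rewrite (var_map gK hK e (maxop e _)) (var_map gK hK e (fun y => F (h y))).
have E1 : (fun x => F (h (g x))) =1 F by move=> x; rewrite gK.
rewrite (var_ext _ E1).
rewrite (@var_ext _ _ _ (fun x => maxop e (fun y => F (h y)) (g x)) (maxop (relpre g e) F)); first by split.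
by move=> x; rewrite (maxop_map gK hK) //; apply: maxop_ext.
Qed.

Lemma connect_map (T1 T2 : finType) (g : T1 -> T2) (h : T2 -> T1)
  (gK : cancel g h) (hK : cancel h g) (e : rel T2) x y :
  connect e (g x) (g y) -> connect (relpre g e) x y.
Proof.
move/connectP=> [p Hp Hl]; apply/connectP; exists (map h p).
  by rewrite -path_map (mapK hK).
apply: (can_inj gK); by rewrite Hl -(last_map g) (mapK hK).
Qed.

Definition permf (l : seq nat) (i : 'I_4) : 'I_4 := nth i0 ords (nth 0%N l i).
Definition cancb (l l' : seq nat) : bool := all (fun x => permf l' (permf l x) == x) ords.
Definition releqb (E1 E2 : rel 'I_4) : bool :=
  all (fun x => all (fun y => E1 x y == E2 x y) ords) ords.

Lemma cancbP l l' : cancb l l' -> cancel (permf l) (permf l').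
Proof.
move=> /allP H x; apply/eqP; exact: H (ords_all x).
Qed.

Lemma releqbP E1 E2 : releqb E1 E2 -> E1 = E2.
Proof.
move=> /allP H; apply: FunctionalExtensionality.functional_extensionality => x.
apply: FunctionalExtensionality.functional_extensionality => y.
by apply/eqP; move/allP: (H x (ords_all x)) => H'; exact: H' (ords_all y).
Qed.

Lemma P_perm (R : realFieldType) l l' (C E : rel 'I_4) :
  cancb l l' -> cancb l' l -> releqb (relpre (permf l) E) C -> Pgood R C -> Pgood R E.
Proof.
move=> H1 H2 H3 HC; apply: (P_map (cancbP H1) (cancbP H2)) => //.
by rewrite (releqbP H3).
Qed.

Definition delta (R : realFieldType) (k : nat) (w : 'I_4) : R :=
  if nat_of_ord w == k then 1 else 0.

Ltac posT E F H0 H1 H2 H3 :=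
  rewrite !(var4s _ (relb_sym _ _ _ _ _ _)) /vt;
  evalrel; cbv beta iota;
  rewrite H0 H1 H2 H3 ?subr0 ?sub0r ?subrr ?normrN ?normr0 ?normr1; lra.

Ltac classT R E k c0 c1 c2 c3 :=
  split; [ let F := fresh "F" in intro F; upper E F
         | exists (delta R k);
           let H0 := fresh "H0" in let H1 := fresh "H1" in
           let H2 := fresh "H2" in let H3 := fresh "H3" in
           have H0 : delta R k i0 = c0 := erefl;
           have H1 : delta R k i1 = c1 := erefl;
           have H2 : delta R k i2 = c2 := erefl;
           have H3 : delta R k i3 = c3 := erefl;
           split; [ lowerT E (delta R k) H0 H1 H2 H3 | posT E (delta R k) H0 H1 H2 H3 ] ].

Lemma class_K4 (R : realFieldType) : Pgood R (relb true true true true true true).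
Proof. classT R (relb true true true true true true) 0%N (1 : R) (0 : R) (0 : R) (0 : R). Qed.


Lemma class_S4 (R : realFieldType) : Pgood R (relb true true true false false false).
Proof. classT R (relb true true true false false false) 1%N (0 : R) (1 : R) (0 : R) (0 : R). Qed.

Lemma class_C4 (R : realFieldType) : Pgood R (relb true false true true false true).
Proof. classT R (relb true false true true false true) 0%N (1 : R) (0 : R) (0 : R) (0 : R). Qed.

Lemma class_P4 (R : realFieldType) : Pgood R (relb true false false true false true).
Proof. classT R (relb true false false true false true) 0%N (1 : R) (0 : R) (0 : R) (0 : R). Qed.

Lemma class_paw (R : realFieldType) : Pgood R (relb true true false true false true).
Proof. classT R (relb true true false true false true) 3%N (0 : R) (0 : R) (0 : R) (1 : R). Qed.

Lemma class_dia (R : realFieldType) : Pgood R (relb false true true true true true).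
Proof. classT R (relb false true true true true true) 0%N (1 : R) (0 : R) (0 : R) (0 : R). Qed.

Ltac permsearch R := first [
  apply: (@P_perm _ ([:: 0; 1; 2; 3])%N ([:: 0; 1; 2; 3])%N (relb true true true true true true) _ _ _ _ (class_K4 R)); by vm_compute
  | apply: (@P_perm _ ([:: 0; 1; 3; 2])%N ([:: 0; 1; 3; 2])%N (relb true true true true true true) _ _ _ _ (class_K4 R)); by vm_compute
  | apply: (@P_perm _ ([:: 0; 2; 1; 3])%N ([:: 0; 2; 1; 3])%N (relb true true true true true true) _ _ _ _ (class_K4 R)); by vm_compute
  | apply: (@P_perm _ ([:: 0; 2; 3; 1])%N ([:: 0; 3; 1; 2])%N (relb true true true true true true) _ _ _ _ (class_K4 R)); by vm_compute
  | apply: (@P_perm _ ([:: 0; 3; 1; 2])%N ([:: 0; 2; 3; 1])%N (relb true true true true true true) _ _ _ _ (class_K4 R)); by vm_compute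
  | apply: (@P_perm _ ([:: 0; 3; 2; 1])%N ([:: 0; 3; 2; 1])%N (relb true true true true true true) _ _ _ _ (class_K4 R)); by vm_compute
  | apply: (@P_perm _ ([:: 1; 0; 2; 3])%N ([:: 1; 0; 2; 3])%N (relb true true true true true true) _ _ _ _ (class_K4 R)); by vm_compute
  | apply: (@P_perm _ ([:: 1; 0; 3; 2])%N ([:: 1; 0; 3; 2])%N (relb true true true true true true) _ _ _ _ (class_K4 R)); by vm_compute
  | apply: (@P_perm _ ([:: 1; 2; 0; 3])%N ([:: 2; 0; 1; 3])%N (relb true true true true true true) _ _ _ _ (class_K4 R)); by vm_compute
  | apply: (@P_perm _ ([:: 1; 2; 3; 0])%N ([:: 3; 0; 1; 2])%N (relb true true true true true true) _ _ _ _ (class_K4 R)); by vm_compute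
  | apply: (@P_perm _ ([:: 1; 3; 0; 2])%N ([:: 2; 0; 3; 1])%N (relb true true true true true true) _ _ _ _ (class_K4 R)); by vm_compute
  | apply: (@P_perm _ ([:: 1; 3; 2; 0])%N ([:: 3; 0; 2; 1])%N (relb true true true true true true) _ _ _ _ (class_K4 R)); by vm_compute
  | apply: (@P_perm _ ([:: 2; 0; 1; 3])%N ([:: 1; 2; 0; 3])%N (relb true true true true true true) _ _ _ _ (class_K4 R)); by vm_compute
  | apply: (@P_perm _ ([:: 2; 0; 3; 1])%N ([:: 1; 3; 0; 2])%N (relb true true true true true true) _ _ _ _ (class_K4 R)); by vm_compute
  | apply: (@P_perm _ ([:: 2; 1; 0; 3])%N ([:: 2; 1; 0; 3])%N (relb true true true true true true) _ _ _ _ (class_K4 R)); by vm_compute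
  | apply: (@P_perm _ ([:: 2; 1; 3; 0])%N ([:: 3; 1; 0; 2])%N (relb true true true true true true) _ _ _ _ (class_K4 R)); by vm_compute
  | apply: (@P_perm _ ([:: 2; 3; 0; 1])%N ([:: 2; 3; 0; 1])%N (relb true true true true true true) _ _ _ _ (class_K4 R)); by vm_compute
  | apply: (@P_perm _ ([:: 2; 3; 1; 0])%N ([:: 3; 2; 0; 1])%N (relb true true true true true true) _ _ _ _ (class_K4 R)); by vm_compute
  | apply: (@P_perm _ ([:: 3; 0; 1; 2])%N ([:: 1; 2; 3; 0])%N (relb true true true true true true) _ _ _ _ (class_K4 R)); by vm_compute
  | apply: (@P_perm _ ([:: 3; 0; 2; 1])%N ([:: 1; 3; 2; 0])%N (relb true true true true true true) _ _ _ _ (class_K4 R)); by vm_compute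
  | apply: (@P_perm _ ([:: 3; 1; 0; 2])%N ([:: 2; 1; 3; 0])%N (relb true true true true true true) _ _ _ _ (class_K4 R)); by vm_compute
  | apply: (@P_perm _ ([:: 3; 1; 2; 0])%N ([:: 3; 1; 2; 0])%N (relb true true true true true true) _ _ _ _ (class_K4 R)); by vm_compute
  | apply: (@P_perm _ ([:: 3; 2; 0; 1])%N ([:: 2; 3; 1; 0])%N (relb true true true true true true) _ _ _ _ (class_K4 R)); by vm_compute
  | apply: (@P_perm _ ([:: 3; 2; 1; 0])%N ([:: 3; 2; 1; 0])%N (relb true true true true true true) _ _ _ _ (class_K4 R)); by vm_compute
  | apply: (@P_perm _ ([:: 0; 1; 2; 3])%N ([:: 0; 1; 2; 3])%N (relb true true true false false false) _ _ _ _ (class_S4 R)); by vm_compute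
  | apply: (@P_perm _ ([:: 0; 1; 3; 2])%N ([:: 0; 1; 3; 2])%N (relb true true true false false false) _ _ _ _ (class_S4 R)); by vm_compute
  | apply: (@P_perm _ ([:: 0; 2; 1; 3])%N ([:: 0; 2; 1; 3])%N (relb true true true false false false) _ _ _ _ (class_S4 R)); by vm_compute
  | apply: (@P_perm _ ([:: 0; 2; 3; 1])%N ([:: 0; 3; 1; 2])%N (relb true true true false false false) _ _ _ _ (class_S4 R)); by vm_compute
  | apply: (@P_perm _ ([:: 0; 3; 1; 2])%N ([:: 0; 2; 3; 1])%N (relb true true true false false false) _ _ _ _ (class_S4 R)); by vm_compute
  | apply: (@P_perm _ ([:: 0; 3; 2; 1])%N ([:: 0; 3; 2; 1])%N (relb true true true false false false) _ _ _ _ (class_S4 R)); by vm_compute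
  | apply: (@P_perm _ ([:: 1; 0; 2; 3])%N ([:: 1; 0; 2; 3])%N (relb true true true false false false) _ _ _ _ (class_S4 R)); by vm_compute
  | apply: (@P_perm _ ([:: 1; 0; 3; 2])%N ([:: 1; 0; 3; 2])%N (relb true true true false false false) _ _ _ _ (class_S4 R)); by vm_compute
  | apply: (@P_perm _ ([:: 1; 2; 0; 3])%N ([:: 2; 0; 1; 3])%N (relb true true true false false false) _ _ _ _ (class_S4 R)); by vm_compute
  | apply: (@P_perm _ ([:: 1; 2; 3; 0])%N ([:: 3; 0; 1; 2])%N (relb true true true false false false) _ _ _ _ (class_S4 R)); by vm_compute
  | apply: (@P_perm _ ([:: 1; 3; 0; 2])%N ([:: 2; 0; 3; 1])%N (relb true true true false false false) _ _ _ _ (class_S4 R)); by vm_compute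
  | apply: (@P_perm _ ([:: 1; 3; 2; 0])%N ([:: 3; 0; 2; 1])%N (relb true true true false false false) _ _ _ _ (class_S4 R)); by vm_compute
  | apply: (@P_perm _ ([:: 2; 0; 1; 3])%N ([:: 1; 2; 0; 3])%N (relb true true true false false false) _ _ _ _ (class_S4 R)); by vm_compute
  | apply: (@P_perm _ ([:: 2; 0; 3; 1])%N ([:: 1; 3; 0; 2])%N (relb true true true false false false) _ _ _ _ (class_S4 R)); by vm_compute
  | apply: (@P_perm _ ([:: 2; 1; 0; 3])%N ([:: 2; 1; 0; 3])%N (relb true true true false false false) _ _ _ _ (class_S4 R)); by vm_compute
  | apply: (@P_perm _ ([:: 2; 1; 3; 0])%N ([:: 3; 1; 0; 2])%N (relb true true true false false false) _ _ _ _ (class_S4 R)); by vm_compute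
  | apply: (@P_perm _ ([:: 2; 3; 0; 1])%N ([:: 2; 3; 0; 1])%N (relb true true true false false false) _ _ _ _ (class_S4 R)); by vm_compute
  | apply: (@P_perm _ ([:: 2; 3; 1; 0])%N ([:: 3; 2; 0; 1])%N (relb true true true false false false) _ _ _ _ (class_S4 R)); by vm_compute
  | apply: (@P_perm _ ([:: 3; 0; 1; 2])%N ([:: 1; 2; 3; 0])%N (relb true true true false false false) _ _ _ _ (class_S4 R)); by vm_compute
  | apply: (@P_perm _ ([:: 3; 0; 2; 1])%N ([:: 1; 3; 2; 0])%N (relb true true true false false false) _ _ _ _ (class_S4 R)); by vm_compute
  | apply: (@P_perm _ ([:: 3; 1; 0; 2])%N ([:: 2; 1; 3; 0])%N (relb true true true false false false) _ _ _ _ (class_S4 R)); by vm_compute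
  | apply: (@P_perm _ ([:: 3; 1; 2; 0])%N ([:: 3; 1; 2; 0])%N (relb true true true false false false) _ _ _ _ (class_S4 R)); by vm_compute
  | apply: (@P_perm _ ([:: 3; 2; 0; 1])%N ([:: 2; 3; 1; 0])%N (relb true true true false false false) _ _ _ _ (class_S4 R)); by vm_compute
  | apply: (@P_perm _ ([:: 3; 2; 1; 0])%N ([:: 3; 2; 1; 0])%N (relb true true true false false false) _ _ _ _ (class_S4 R)); by vm_compute
  | apply: (@P_perm _ ([:: 0; 1; 2; 3])%N ([:: 0; 1; 2; 3])%N (relb true false true true false true) _ _ _ _ (class_C4 R)); by vm_compute
  | apply: (@P_perm _ ([:: 0; 1; 3; 2])%N ([:: 0; 1; 3; 2])%N (relb true false true true false true) _ _ _ _ (class_C4 R)); by vm_compute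
  | apply: (@P_perm _ ([:: 0; 2; 1; 3])%N ([:: 0; 2; 1; 3])%N (relb true false true true false true) _ _ _ _ (class_C4 R)); by vm_compute
  | apply: (@P_perm _ ([:: 0; 2; 3; 1])%N ([:: 0; 3; 1; 2])%N (relb true false true true false true) _ _ _ _ (class_C4 R)); by vm_compute
  | apply: (@P_perm _ ([:: 0; 3; 1; 2])%N ([:: 0; 2; 3; 1])%N (relb true false true true false true) _ _ _ _ (class_C4 R)); by vm_compute
  | apply: (@P_perm _ ([:: 0; 3; 2; 1])%N ([:: 0; 3; 2; 1])%N (relb true false true true false true) _ _ _ _ (class_C4 R)); by vm_compute
  | apply: (@P_perm _ ([:: 1; 0; 2; 3])%N ([:: 1; 0; 2; 3])%N (relb true false true true false true) _ _ _ _ (class_C4 R)); by vm_compute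
  | apply: (@P_perm _ ([:: 1; 0; 3; 2])%N ([:: 1; 0; 3; 2])%N (relb true false true true false true) _ _ _ _ (class_C4 R)); by vm_compute
  | apply: (@P_perm _ ([:: 1; 2; 0; 3])%N ([:: 2; 0; 1; 3])%N (relb true false true true false true) _ _ _ _ (class_C4 R)); by vm_compute
  | apply: (@P_perm _ ([:: 1; 2; 3; 0])%N ([:: 3; 0; 1; 2])%N (relb true false true true false true) _ _ _ _ (class_C4 R)); by vm_compute
  | apply: (@P_perm _ ([:: 1; 3; 0; 2])%N ([:: 2; 0; 3; 1])%N (relb true false true true false true) _ _ _ _ (class_C4 R)); by vm_compute
  | apply: (@P_perm _ ([:: 1; 3; 2; 0])%N ([:: 3; 0; 2; 1])%N (relb true false true true false true) _ _ _ _ (class_C4 R)); by vm_compute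
  | apply: (@P_perm _ ([:: 2; 0; 1; 3])%N ([:: 1; 2; 0; 3])%N (relb true false true true false true) _ _ _ _ (class_C4 R)); by vm_compute
  | apply: (@P_perm _ ([:: 2; 0; 3; 1])%N ([:: 1; 3; 0; 2])%N (relb true false true true false true) _ _ _ _ (class_C4 R)); by vm_compute
  | apply: (@P_perm _ ([:: 2; 1; 0; 3])%N ([:: 2; 1; 0; 3])%N (relb true false true true false true) _ _ _ _ (class_C4 R)); by vm_compute
  | apply: (@P_perm _ ([:: 2; 1; 3; 0])%N ([:: 3; 1; 0; 2])%N (relb true false true true false true) _ _ _ _ (class_C4 R)); by vm_compute
  | apply: (@P_perm _ ([:: 2; 3; 0; 1])%N ([:: 2; 3; 0; 1])%N (relb true false true true false true) _ _ _ _ (class_C4 R)); by vm_compute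
  | apply: (@P_perm _ ([:: 2; 3; 1; 0])%N ([:: 3; 2; 0; 1])%N (relb true false true true false true) _ _ _ _ (class_C4 R)); by vm_compute
  | apply: (@P_perm _ ([:: 3; 0; 1; 2])%N ([:: 1; 2; 3; 0])%N (relb true false true true false true) _ _ _ _ (class_C4 R)); by vm_compute
  | apply: (@P_perm _ ([:: 3; 0; 2; 1])%N ([:: 1; 3; 2; 0])%N (relb true false true true false true) _ _ _ _ (class_C4 R)); by vm_compute
  | apply: (@P_perm _ ([:: 3; 1; 0; 2])%N ([:: 2; 1; 3; 0])%N (relb true false true true false true) _ _ _ _ (class_C4 R)); by vm_compute
  | apply: (@P_perm _ ([:: 3; 1; 2; 0])%N ([:: 3; 1; 2; 0])%N (relb true false true true false true) _ _ _ _ (class_C4 R)); by vm_compute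
  | apply: (@P_perm _ ([:: 3; 2; 0; 1])%N ([:: 2; 3; 1; 0])%N (relb true false true true false true) _ _ _ _ (class_C4 R)); by vm_compute
  | apply: (@P_perm _ ([:: 3; 2; 1; 0])%N ([:: 3; 2; 1; 0])%N (relb true false true true false true) _ _ _ _ (class_C4 R)); by vm_compute
  | apply: (@P_perm _ ([:: 0; 1; 2; 3])%N ([:: 0; 1; 2; 3])%N (relb true false false true false true) _ _ _ _ (class_P4 R)); by vm_compute
  | apply: (@P_perm _ ([:: 0; 1; 3; 2])%N ([:: 0; 1; 3; 2])%N (relb true false false true false true) _ _ _ _ (class_P4 R)); by vm_compute
  | apply: (@P_perm _ ([:: 0; 2; 1; 3])%N ([:: 0; 2; 1; 3])%N (relb true false false true false true) _ _ _ _ (class_P4 R)); by vm_compute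
  | apply: (@P_perm _ ([:: 0; 2; 3; 1])%N ([:: 0; 3; 1; 2])%N (relb true false false true false true) _ _ _ _ (class_P4 R)); by vm_compute
  | apply: (@P_perm _ ([:: 0; 3; 1; 2])%N ([:: 0; 2; 3; 1])%N (relb true false false true false true) _ _ _ _ (class_P4 R)); by vm_compute
  | apply: (@P_perm _ ([:: 0; 3; 2; 1])%N ([:: 0; 3; 2; 1])%N (relb true false false true false true) _ _ _ _ (class_P4 R)); by vm_compute
  | apply: (@P_perm _ ([:: 1; 0; 2; 3])%N ([:: 1; 0; 2; 3])%N (relb true false false true false true) _ _ _ _ (class_P4 R)); by vm_compute
  | apply: (@P_perm _ ([:: 1; 0; 3; 2])%N ([:: 1; 0; 3; 2])%N (relb true false false true false true) _ _ _ _ (class_P4 R)); by vm_compute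
  | apply: (@P_perm _ ([:: 1; 2; 0; 3])%N ([:: 2; 0; 1; 3])%N (relb true false false true false true) _ _ _ _ (class_P4 R)); by vm_compute
  | apply: (@P_perm _ ([:: 1; 2; 3; 0])%N ([:: 3; 0; 1; 2])%N (relb true false false true false true) _ _ _ _ (class_P4 R)); by vm_compute
  | apply: (@P_perm _ ([:: 1; 3; 0; 2])%N ([:: 2; 0; 3; 1])%N (relb true false false true false true) _ _ _ _ (class_P4 R)); by vm_compute
  | apply: (@P_perm _ ([:: 1; 3; 2; 0])%N ([:: 3; 0; 2; 1])%N (relb true false false true false true) _ _ _ _ (class_P4 R)); by vm_compute
  | apply: (@P_perm _ ([:: 2; 0; 1; 3])%N ([:: 1; 2; 0; 3])%N (relb true false false true false true) _ _ _ _ (class_P4 R)); by vm_compute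
  | apply: (@P_perm _ ([:: 2; 0; 3; 1])%N ([:: 1; 3; 0; 2])%N (relb true false false true false true) _ _ _ _ (class_P4 R)); by vm_compute
  | apply: (@P_perm _ ([:: 2; 1; 0; 3])%N ([:: 2; 1; 0; 3])%N (relb true false false true false true) _ _ _ _ (class_P4 R)); by vm_compute
  | apply: (@P_perm _ ([:: 2; 1; 3; 0])%N ([:: 3; 1; 0; 2])%N (relb true false false true false true) _ _ _ _ (class_P4 R)); by vm_compute
  | apply: (@P_perm _ ([:: 2; 3; 0; 1])%N ([:: 2; 3; 0; 1])%N (relb true false false true false true) _ _ _ _ (class_P4 R)); by vm_compute
  | apply: (@P_perm _ ([:: 2; 3; 1; 0])%N ([:: 3; 2; 0; 1])%N (relb true false false true false true) _ _ _ _ (class_P4 R)); by vm_compute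
  | apply: (@P_perm _ ([:: 3; 0; 1; 2])%N ([:: 1; 2; 3; 0])%N (relb true false false true false true) _ _ _ _ (class_P4 R)); by vm_compute
  | apply: (@P_perm _ ([:: 3; 0; 2; 1])%N ([:: 1; 3; 2; 0])%N (relb true false false true false true) _ _ _ _ (class_P4 R)); by vm_compute
  | apply: (@P_perm _ ([:: 3; 1; 0; 2])%N ([:: 2; 1; 3; 0])%N (relb true false false true false true) _ _ _ _ (class_P4 R)); by vm_compute
  | apply: (@P_perm _ ([:: 3; 1; 2; 0])%N ([:: 3; 1; 2; 0])%N (relb true false false true false true) _ _ _ _ (class_P4 R)); by vm_compute
  | apply: (@P_perm _ ([:: 3; 2; 0; 1])%N ([:: 2; 3; 1; 0])%N (relb true false false true false true) _ _ _ _ (class_P4 R)); by vm_compute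
  | apply: (@P_perm _ ([:: 3; 2; 1; 0])%N ([:: 3; 2; 1; 0])%N (relb true false false true false true) _ _ _ _ (class_P4 R)); by vm_compute
  | apply: (@P_perm _ ([:: 0; 1; 2; 3])%N ([:: 0; 1; 2; 3])%N (relb true true false true false true) _ _ _ _ (class_paw R)); by vm_compute
  | apply: (@P_perm _ ([:: 0; 1; 3; 2])%N ([:: 0; 1; 3; 2])%N (relb true true false true false true) _ _ _ _ (class_paw R)); by vm_compute
  | apply: (@P_perm _ ([:: 0; 2; 1; 3])%N ([:: 0; 2; 1; 3])%N (relb true true false true false true) _ _ _ _ (class_paw R)); by vm_compute
  | apply: (@P_perm _ ([:: 0; 2; 3; 1])%N ([:: 0; 3; 1; 2])%N (relb true true false true false true) _ _ _ _ (class_paw R)); by vm_compute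
  | apply: (@P_perm _ ([:: 0; 3; 1; 2])%N ([:: 0; 2; 3; 1])%N (relb true true false true false true) _ _ _ _ (class_paw R)); by vm_compute
  | apply: (@P_perm _ ([:: 0; 3; 2; 1])%N ([:: 0; 3; 2; 1])%N (relb true true false true false true) _ _ _ _ (class_paw R)); by vm_compute
  | apply: (@P_perm _ ([:: 1; 0; 2; 3])%N ([:: 1; 0; 2; 3])%N (relb true true false true false true) _ _ _ _ (class_paw R)); by vm_compute
  | apply: (@P_perm _ ([:: 1; 0; 3; 2])%N ([:: 1; 0; 3; 2])%N (relb true true false true false true) _ _ _ _ (class_paw R)); by vm_compute
  | apply: (@P_perm _ ([:: 1; 2; 0; 3])%N ([:: 2; 0; 1; 3])%N (relb true true false true false true) _ _ _ _ (class_paw R)); by vm_compute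
  | apply: (@P_perm _ ([:: 1; 2; 3; 0])%N ([:: 3; 0; 1; 2])%N (relb true true false true false true) _ _ _ _ (class_paw R)); by vm_compute
  | apply: (@P_perm _ ([:: 1; 3; 0; 2])%N ([:: 2; 0; 3; 1])%N (relb true true false true false true) _ _ _ _ (class_paw R)); by vm_compute
  | apply: (@P_perm _ ([:: 1; 3; 2; 0])%N ([:: 3; 0; 2; 1])%N (relb true true false true false true) _ _ _ _ (class_paw R)); by vm_compute
  | apply: (@P_perm _ ([:: 2; 0; 1; 3])%N ([:: 1; 2; 0; 3])%N (relb true true false true false true) _ _ _ _ (class_paw R)); by vm_compute
  | apply: (@P_perm _ ([:: 2; 0; 3; 1])%N ([:: 1; 3; 0; 2])%N (relb true true false true false true) _ _ _ _ (class_paw R)); by vm_compute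
  | apply: (@P_perm _ ([:: 2; 1; 0; 3])%N ([:: 2; 1; 0; 3])%N (relb true true false true false true) _ _ _ _ (class_paw R)); by vm_compute
  | apply: (@P_perm _ ([:: 2; 1; 3; 0])%N ([:: 3; 1; 0; 2])%N (relb true true false true false true) _ _ _ _ (class_paw R)); by vm_compute
  | apply: (@P_perm _ ([:: 2; 3; 0; 1])%N ([:: 2; 3; 0; 1])%N (relb true true false true false true) _ _ _ _ (class_paw R)); by vm_compute
  | apply: (@P_perm _ ([:: 2; 3; 1; 0])%N ([:: 3; 2; 0; 1])%N (relb true true false true false true) _ _ _ _ (class_paw R)); by vm_compute
  | apply: (@P_perm _ ([:: 3; 0; 1; 2])%N ([:: 1; 2; 3; 0])%N (relb true true false true false true) _ _ _ _ (class_paw R)); by vm_compute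
  | apply: (@P_perm _ ([:: 3; 0; 2; 1])%N ([:: 1; 3; 2; 0])%N (relb true true false true false true) _ _ _ _ (class_paw R)); by vm_compute
  | apply: (@P_perm _ ([:: 3; 1; 0; 2])%N ([:: 2; 1; 3; 0])%N (relb true true false true false true) _ _ _ _ (class_paw R)); by vm_compute
  | apply: (@P_perm _ ([:: 3; 1; 2; 0])%N ([:: 3; 1; 2; 0])%N (relb true true false true false true) _ _ _ _ (class_paw R)); by vm_compute
  | apply: (@P_perm _ ([:: 3; 2; 0; 1])%N ([:: 2; 3; 1; 0])%N (relb true true false true false true) _ _ _ _ (class_paw R)); by vm_compute
  | apply: (@P_perm _ ([:: 3; 2; 1; 0])%N ([:: 3; 2; 1; 0])%N (relb true true false true false true) _ _ _ _ (class_paw R)); by vm_compute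
  | apply: (@P_perm _ ([:: 0; 1; 2; 3])%N ([:: 0; 1; 2; 3])%N (relb false true true true true true) _ _ _ _ (class_dia R)); by vm_compute
  | apply: (@P_perm _ ([:: 0; 1; 3; 2])%N ([:: 0; 1; 3; 2])%N (relb false true true true true true) _ _ _ _ (class_dia R)); by vm_compute
  | apply: (@P_perm _ ([:: 0; 2; 1; 3])%N ([:: 0; 2; 1; 3])%N (relb false true true true true true) _ _ _ _ (class_dia R)); by vm_compute
  | apply: (@P_perm _ ([:: 0; 2; 3; 1])%N ([:: 0; 3; 1; 2])%N (relb false true true true true true) _ _ _ _ (class_dia R)); by vm_compute
  | apply: (@P_perm _ ([:: 0; 3; 1; 2])%N ([:: 0; 2; 3; 1])%N (relb false true true true true true) _ _ _ _ (class_dia R)); by vm_compute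
  | apply: (@P_perm _ ([:: 0; 3; 2; 1])%N ([:: 0; 3; 2; 1])%N (relb false true true true true true) _ _ _ _ (class_dia R)); by vm_compute
  | apply: (@P_perm _ ([:: 1; 0; 2; 3])%N ([:: 1; 0; 2; 3])%N (relb false true true true true true) _ _ _ _ (class_dia R)); by vm_compute
  | apply: (@P_perm _ ([:: 1; 0; 3; 2])%N ([:: 1; 0; 3; 2])%N (relb false true true true true true) _ _ _ _ (class_dia R)); by vm_compute
  | apply: (@P_perm _ ([:: 1; 2; 0; 3])%N ([:: 2; 0; 1; 3])%N (relb false true true true true true) _ _ _ _ (class_dia R)); by vm_compute
  | apply: (@P_perm _ ([:: 1; 2; 3; 0])%N ([:: 3; 0; 1; 2])%N (relb false true true true true true) _ _ _ _ (class_dia R)); by vm_compute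
  | apply: (@P_perm _ ([:: 1; 3; 0; 2])%N ([:: 2; 0; 3; 1])%N (relb false true true true true true) _ _ _ _ (class_dia R)); by vm_compute
  | apply: (@P_perm _ ([:: 1; 3; 2; 0])%N ([:: 3; 0; 2; 1])%N (relb false true true true true true) _ _ _ _ (class_dia R)); by vm_compute
  | apply: (@P_perm _ ([:: 2; 0; 1; 3])%N ([:: 1; 2; 0; 3])%N (relb false true true true true true) _ _ _ _ (class_dia R)); by vm_compute
  | apply: (@P_perm _ ([:: 2; 0; 3; 1])%N ([:: 1; 3; 0; 2])%N (relb false true true true true true) _ _ _ _ (class_dia R)); by vm_compute
  | apply: (@P_perm _ ([:: 2; 1; 0; 3])%N ([:: 2; 1; 0; 3])%N (relb false true true true true true) _ _ _ _ (class_dia R)); by vm_compute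
  | apply: (@P_perm _ ([:: 2; 1; 3; 0])%N ([:: 3; 1; 0; 2])%N (relb false true true true true true) _ _ _ _ (class_dia R)); by vm_compute
  | apply: (@P_perm _ ([:: 2; 3; 0; 1])%N ([:: 2; 3; 0; 1])%N (relb false true true true true true) _ _ _ _ (class_dia R)); by vm_compute
  | apply: (@P_perm _ ([:: 2; 3; 1; 0])%N ([:: 3; 2; 0; 1])%N (relb false true true true true true) _ _ _ _ (class_dia R)); by vm_compute
  | apply: (@P_perm _ ([:: 3; 0; 1; 2])%N ([:: 1; 2; 3; 0])%N (relb false true true true true true) _ _ _ _ (class_dia R)); by vm_compute
  | apply: (@P_perm _ ([:: 3; 0; 2; 1])%N ([:: 1; 3; 2; 0])%N (relb false true true true true true) _ _ _ _ (class_dia R)); by vm_compute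
  | apply: (@P_perm _ ([:: 3; 1; 0; 2])%N ([:: 2; 1; 3; 0])%N (relb false true true true true true) _ _ _ _ (class_dia R)); by vm_compute
  | apply: (@P_perm _ ([:: 3; 1; 2; 0])%N ([:: 3; 1; 2; 0])%N (relb false true true true true true) _ _ _ _ (class_dia R)); by vm_compute
  | apply: (@P_perm _ ([:: 3; 2; 0; 1])%N ([:: 2; 3; 1; 0])%N (relb false true true true true true) _ _ _ _ (class_dia R)); by vm_compute
  | apply: (@P_perm _ ([:: 3; 2; 1; 0])%N ([:: 3; 2; 1; 0])%N (relb false true true true true true) _ _ _ _ (class_dia R)); by vm_compute ].

Lemma I4_all (R : realFieldType) b1 b2 b3 b4 b5 b6 :
  connected_graph (relb b1 b2 b3 b4 b5 b6) -> Pgood R (relb b1 b2 b3 b4 b5 b6).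
Proof.
case: b1; case: b2; case: b3; case: b4; case: b5; case: b6 => Hc;
  first [ disc Hc | permsearch R ].
Qed.

Unset Implicit Arguments.

Theorem theorem2 (R : realFieldType) (T : finType) (e : rel T) :
  #|T| = 4%N -> simple_graph e -> connected_graph e ->
  (forall f : T -> R, var e (maxop e f) <= 3 / 4 * var e f) /\
  (forall c : R, c < 3 / 4 -> exists f : T -> R, c * var e f < var e (maxop e f)).
Proof.
move=> HT Hs Hc.
pose g : 'I_4 -> T := fun i => enum_val (cast_ord (esym HT) i).
pose h : T -> 'I_4 := fun x => cast_ord HT (enum_rank x).
have gK : cancel g h by move=> i; rewrite /g /h enum_valK cast_ordKV.
have hK : cancel h g by move=> x; rewrite /g /h cast_ordK enum_rankK.
have HP : Pgood R (relpre g e).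
  have Hs' : simple_graph (relpre g e).
    by split; [move=> x y /=; exact: Hs.1 (g x) (g y) | move=> x /=; exact: Hs.2 (g x)].
  have Hc' : connected_graph (relpre g e).
    by move=> x y; apply: (connect_map gK hK); exact: Hc.
  move: Hc'; rewrite (symm_relb Hs'); exact: I4_all.
have HT' : #|'I_4| = #|T| by rewrite card_ord HT.
have [Hu [F [Hl Hp]]] := P_map gK hK HT' HP.
split; first exact: Hu.
move=> c Hc0; exists F.
apply: (lt_le_trans _ Hl); by rewrite ltr_pM2r.
Qed.
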